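(* Let $\mathcal{T}$ be a tangle of order $k$ in a connectivity system $(E,\lambda)$, and let $(R,G)$ be a $\mathcal{T}$-strong $k$-separation of $\lambda$. (i) If $A\subseteq G$ is a non-empty $\mathcal{T}$-weak set such that $R\cup A$ is $k$-separating, and $G-A$ is $\mathcal{T}$-strong, then $(R,G)$ is $\mathcal{T}$-equivalent to $(R\cup A, G-A)$. (ii) If $(R,G)$ is a non-sequential $k$-separation, and $A\subseteq G$ is a non-empty $\mathcal{T}$-weak set such that $R\cup A$ is $k$-separating, then $(R\cup A, G-A)$ is $\mathcal{T}$-equivalent to $(R,G)$. (iii) If $(R,G)$ is a non-sequential $k$-separation, then $(\mathrm{fcl}_{\mathcal{T}}(R), E-\mathrm{fcl}_{\mathcal{T}}(R))$ is $\mathcal{T}$-equivalent to $(R,G)$. (iv) If $(R,G)$ is a non-sequential $k$-separation, and $X$ is a $k$-separating set such that $E-\mathrm{fcl}_{\mathcal{T}}(G)\subseteq X\subseteq R$, then $(X,E-X)$ is $\mathcal{T}$-equivalent to $(R,G)$.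
   Context: A connectivity system is a pair $(E,\lambda)$ with $E$ finite and $\lambda$ an integer-valued symmetric submodular function on subsets of $E$. $X$ is $k$-separating if $\lambda(X)\le k$; a $k$-separation is an unordered partition $(X,E-X)$ with $\lambda(X)\le k$. A tangle of order $k$ is a collection $\mathcal T$ of subsets of $E$ with (T1) $\lambda(A)<k$ for $A\in\mathcal T$; (T2) if $\lambda(A)\le k-1$ then $A\in\mathcal T$ or $E-A\in\mathcal T$; (T3) $A\cup B\cup C\ne E$ for $A,B,C\in\mathcal T$; (T4) $E-\{e\}\notin\mathcal T$ for $e\in E$. A set is $\mathcal T$-weak if contained in a member of $\mathcal T$, and $\mathcal T$-strong otherwise; a $k$-separation is $\mathcal T$-strong if both parts are. A $\mathcal T$-strong $k$-separating set $X$ is fully closed if $X\cup Y$ is not $k$-separating for every nonempty $\mathcal T$-weak $Y\subseteq E-X$; $\mathrm{fcl}_{\mathcal T}(X)$ is the intersection of all fully closed $k$-separating sets containing $X$. $\mathcal T$-strong $k$-separations $(X,Y),(X',Y')$ are $\mathcal T$-equivalent if $\{\mathrm{fcl}_{\mathcal T}(X),\mathrm{fcl}_{\mathcal T}(Y)\}=\{\mathrm{fcl}_{\mathcal T}(X'),\mathrm{fcl}_{\mathcal T}(Y')\}$. A $k$-separating set $X$ is $\mathcal T$-sequential if $E-X$ is $\mathcal T$-strong and $\mathrm{fcl}_{\mathcal T}(E-X)=E$; a $k$-separation is non-sequential if neither part is $\mathcal T$-sequential. *)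

(* Defs.v *)
From HB Require Import structures.
From mathcomp Require Import all_boot all_order all_algebra.
Set Implicit Arguments. Unset Strict Implicit. Unset Printing Implicit Defensive.
Import Order.TTheory GRing.Theory Num.Theory.
Local Open Scope ring_scope.

(* Connectivity systems over a finite ground set E = the finType T,
   with an integer-valued connectivity function lam. *)
Section Connectivity.
Variable T : finType.
Variable lam : {set T} -> int.

Definition symmetric_conn : Prop := forall X : {set T}, lam X = lam (~: X).
Definition submodular_conn : Prop :=
  forall X Y : {set T}, lam (X :&: Y) + lam (X :|: Y) <= lam X + lam Y.
Definition connectivity_system : Prop := symmetric_conn /\ submodular_conn.

Variable k : int.

Definition kseparating (X : {set T}) : bool := lam X <= k.

Definition tangle (Tg : {set {set T}}) : Prop :=
  [/\ (forall A, A \in Tg -> lam A < k),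
      (forall A, lam A <= k - 1 -> (A \in Tg) \/ (~: A \in Tg)),
      (forall A B C, A \in Tg -> B \in Tg -> C \in Tg -> A :|: B :|: C != setT) &
      (forall e : T, ~: [set e] \notin Tg)].

Variable Tg : {set {set T}}.

Definition tweak (Y : {set T}) : bool := [exists A in Tg, Y \subset A].
Definition tstrong (Y : {set T}) : bool := ~~ tweak Y.

Definition fully_closed (X : {set T}) : bool :=
  [&& tstrong X, kseparating X &
      [forall Y : {set T},
         ((Y != set0) && tweak Y && (Y \subset ~: X)) ==> ~~ kseparating (X :|: Y)]].

(* full closure: intersection of all fully closed k-separating sets containing X
   (empty intersection = E) *)
Definition fcl (X : {set T}) : {set T} :=
  \bigcap_(Y : {set T} | fully_closed Y && (X \subset Y)) Y.

Definition strong_ksep (X Y : {set T}) : bool :=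
  [&& Y == ~: X, kseparating X, tstrong X & tstrong Y].

Definition tequiv (X Y X' Y' : {set T}) : bool :=
  [&& strong_ksep X Y, strong_ksep X' Y' &
      (((fcl X == fcl X') && (fcl Y == fcl Y')) ||
       ((fcl X == fcl Y') && (fcl Y == fcl X')))].

Definition tsequential (X : {set T}) : bool :=
  [&& kseparating X, tstrong (~: X) & fcl (~: X) == setT].

Definition nonsequential (X Y : {set T}) : bool :=
  ~~ tsequential X && ~~ tsequential Y.

End Connectivity.

(* Main.v *)
Require Import Defs.
From mathcomp Require Import all_boot all_order all_algebra.
From mathcomp Require Import zify.
Set Implicit Arguments. Unset Strict Implicit. Unset Printing Implicit Defensive.
Import Order.TTheory GRing.Theory Num.Theory.
Local Open Scope ring_scope.

Section Proofs.
Variable T : finType.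
Variable lam : {set T} -> int.
Variable k : int.
Variable Tg : {set {set T}}.
Hypothesis sym : symmetric_conn lam.
Hypothesis sub : submodular_conn lam.
Hypothesis t2 : forall A, lam A <= k - 1 -> (A \in Tg) \/ (~: A \in Tg).

Lemma weak_sub (A B : {set T}) : A \subset B -> tweak Tg B -> tweak Tg A.
Proof.
move=> AB /existsP [C /andP [CT BC]]; apply/existsP; exists C.
by rewrite CT (subset_trans AB BC).
Qed.

Lemma strong_sup (A B : {set T}) : A \subset B -> tstrong Tg A -> tstrong Tg B.
Proof. by move=> AB; apply: contra; apply: weak_sub. Qed.

Lemma inT_weak (A : {set T}) : A \in Tg -> tweak Tg A.
Proof. by move=> AT; apply/existsP; exists A; rewrite AT subxx. Qed.

Lemma fcl_mono (X Y : {set T}) : X \subset Y -> fcl lam k Tg X \subset fcl lam k Tg Y.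
Proof.
move=> XY; apply/bigcapsP => Z /andP [fZ YZ]; apply: bigcap_inf.
by rewrite fZ (subset_trans XY YZ).
Qed.

Lemma sub_fcl (X : {set T}) : X \subset fcl lam k Tg X.
Proof. by apply/bigcapsP => Z /andP [_ ->]. Qed.

Lemma fcl_fc (X : {set T}) : fully_closed lam k Tg X -> fcl lam k Tg X = X.
Proof.
move=> fX; apply/eqP; rewrite eqEsubset sub_fcl andbT.
by apply: bigcap_inf; rewrite fX subxx.
Qed.

Lemma fcl_eq_of (P Q : {set T}) :
  (forall Y, fully_closed lam k Tg Y -> P \subset Y -> Q \subset Y) ->
  P \subset Q -> fcl lam k Tg P = fcl lam k Tg Q.
Proof.
move=> H PQ; apply/eqP; rewrite eqEsubset fcl_mono //=.
apply/bigcapsP => Z /andP [fZ PZ]; apply: bigcap_inf; by rewrite fZ H.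
Qed.

Lemma lamT (X : {set T}) : lam setT <= lam X.
Proof.
have := sub X (~: X); rewrite setICr setUCr -(sym X) (sym set0) setC0.
lia.
Qed.

Lemma keyL (P Q Y : {set T}) : P \subset Q -> kseparating lam k Q -> tstrong Tg P ->
  tweak Tg (Q :\: P) -> fully_closed lam k Tg Y -> P \subset Y -> Q \subset Y.
Proof.
move=> PQ kQ sP wD /and3P [sY kY /forallP H] PY.
apply/negPn/negP => nQY.
set Z := Q :\: Y.
have Z0 : Z != set0 by rewrite setD_eq0.
have wZ : tweak Tg Z.
  by apply: (weak_sub _ wD); apply: setDS.
have ZY : Z \subset ~: Y by rewrite /Z setDE subsetIr.
have := H Z; rewrite Z0 wZ ZY /= => nk.
have UE : Y :|: Z = Y :|: Q.
  apply/setP => x; rewrite !inE; by case: (x \in Y); case: (x \in Q).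
rewrite UE /kseparating in nk.
move: kQ kY; rewrite /kseparating => kQ kY.
have hs := sub Y Q.
have lt : lam (Y :&: Q) <= k - 1 by lia.
case: (t2 lt) => HT.
  move/negP: sP; apply; apply: (weak_sub _ (inT_weak HT)).
  by rewrite subsetI PY PQ.
have wY : tweak Tg (~: Y).
  by apply: (weak_sub _ (inT_weak HT)); rewrite setCS subsetIl.
case: (eqVneq (~: Y) set0) => Y0.
  move/negP: nQY; apply; apply/subsetP => x _.
  by move: Y0 => /setP /(_ x); rewrite !inE; case: (x \in Y).
have := H (~: Y); rewrite Y0 wY subxx setUCr /= /kseparating.
have := lamT Q; lia.
Qed.

Lemma weakC_fcl (Q : {set T}) : kseparating lam k Q -> tweak Tg (~: Q) ->
  fcl lam k Tg Q = setT.
Proof.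
move=> kQ wQ; apply/eqP; rewrite eqEsubset subsetT /=.
apply/bigcapsP => Y /andP [fY QY].
move: fY => /and3P [sY kY /forallP H].
case: (eqVneq (~: Y) set0) => Y0.
  apply/subsetP => x _.
  by move: Y0 => /setP /(_ x); rewrite !inE; case: (x \in Y).
have wY : tweak Tg (~: Y) by apply: (weak_sub _ wQ); rewrite setCS.
have := H (~: Y); rewrite Y0 wY subxx setUCr /= /kseparating.
move: kQ; rewrite /kseparating; have := lamT Q; lia.
Qed.

Lemma lemM (R : {set T}) : kseparating lam k R -> tstrong Tg R -> tstrong Tg (~: R) ->
  fcl lam k Tg R != setT ->
  [/\ fully_closed lam k Tg (fcl lam k Tg R), tstrong Tg (~: fcl lam k Tg R) &
      fcl lam k Tg (~: fcl lam k Tg R) = fcl lam k Tg (~: R)].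
Proof.
move=> kR sR sG nE.
pose S (Q : {set T}) := [&& R \subset Q, kseparating lam k Q, fcl lam k Tg Q == fcl lam k Tg R,
              tstrong Tg (~: Q) & fcl lam k Tg (~: Q) == fcl lam k Tg (~: R)].
suff : forall m (Q : {set T}), (#|~: Q| < m)%N -> S Q ->
  [/\ fully_closed lam k Tg (fcl lam k Tg R), tstrong Tg (~: fcl lam k Tg R) &
      fcl lam k Tg (~: fcl lam k Tg R) = fcl lam k Tg (~: R)].
  move=> /(_ #|~: R|.+1 R (ltnSn _)); apply.
  by rewrite /S subxx kR sG !eqxx.
elim=> [//|m IH] Q cQ /and5P [RQ kQ /eqP fQ sQ /eqP fcQ].
have sQ' : tstrong Tg Q by apply: strong_sup sR.
case fcQb : (fully_closed lam k Tg Q).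
  by rewrite -fQ (fcl_fc fcQb).
move: fcQb; rewrite /fully_closed sQ' kQ /= => /negbT /forallPn [Y].
rewrite negb_imply negbK => /andP [/andP [/andP [Y0 wY] YQ] kQY].
have fQY : fcl lam k Tg (Q :|: Y) = fcl lam k Tg Q.
  symmetry; apply: fcl_eq_of; last exact: subsetUl.
  move=> Z fZ QZ; apply: (keyL (subsetUl Q Y) kQY sQ' _ fZ QZ).
  by apply: (weak_sub _ wY); apply/subsetP => x; rewrite !inE; case: (x \in Q); case: (x \in Y).
have sQY : tstrong Tg (~: (Q :|: Y)).
  apply/negP => w; move/eqP: nE; apply.
  by rewrite -fQ -fQY weakC_fcl.
have kCQ : kseparating lam k (~: Q) by rewrite /kseparating -sym.
have fcQY : fcl lam k Tg (~: (Q :|: Y)) = fcl lam k Tg (~: Q).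
  have sub1 : ~: (Q :|: Y) \subset ~: Q by rewrite setCS subsetUl.
  apply: fcl_eq_of => // Z fZ PZ; apply: (keyL sub1 kCQ sQY _ fZ PZ).
  by apply: (weak_sub _ wY); apply/subsetP => x; rewrite !inE; case: (x \in Q); case: (x \in Y).
apply: (IH (Q :|: Y)).
  have cQ2 : (#|~: Q| <= m)%N by []. apply: (leq_trans _ cQ2); apply: proper_card; rewrite properEneq setCS subsetUl andbT.
  case/set0Pn: Y0 => y yY; apply/eqP => /setP /(_ y).
  have := subsetP YQ y yY; rewrite !inE yY orbT => ->; done.
by rewrite /S (subset_trans RQ (subsetUl _ _)) kQY fQY fQ eqxx sQY fcQY fcQ eqxx.
Qed.


Lemma partI (R A : {set T}) : kseparating lam k R -> tstrong Tg R -> tstrong Tg (~: R) ->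
  A \subset ~: R -> tweak Tg A ->
  kseparating lam k (R :|: A) -> tstrong Tg (~: R :\: A) ->
  tequiv lam k Tg R (~: R) (R :|: A) (~: R :\: A).
Proof.
move=> kR sR sG AG wA kRA sGA.
have e1 : ~: R :\: A = ~: (R :|: A) by rewrite setCU setDE.
rewrite /tequiv /strong_ksep eqxx kR sR sG e1 eqxx kRA -e1 sGA /=.
rewrite (strong_sup (subsetUl R A) sR) /=.
have -> : fcl lam k Tg R = fcl lam k Tg (R :|: A).
  apply: fcl_eq_of; last exact: subsetUl.
  move=> Y fY RY; apply: (keyL (subsetUl R A) kRA sR _ fY RY).
  by apply: (weak_sub _ wA); apply/subsetP => x; rewrite !inE; case: (x \in R); case: (x \in A).
have -> : fcl lam k Tg (~: R) = fcl lam k Tg (~: R :\: A).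
  have s1 : ~: R :\: A \subset ~: R by apply: subsetDl.
  have kG : kseparating lam k (~: R) by rewrite /kseparating -sym.
  symmetry; apply: fcl_eq_of => // Y fY PY; apply: (keyL s1 kG sGA _ fY PY).
  by apply: (weak_sub _ wA); apply/subsetP => x; rewrite !inE; case: (x \in R); case: (x \in A).
by rewrite !eqxx.
Qed.

Lemma tequiv_sym (X Y X' Y' : {set T}) :
  tequiv lam k Tg X Y X' Y' -> tequiv lam k Tg X' Y' X Y.
Proof.
rewrite /tequiv => /and3P [a b c]; rewrite a b /=.
by case/orP: c => /andP [/eqP -> /eqP ->]; rewrite !eqxx ?orbT.
Qed.

End Proofs.

Theorem lemma3p8 (T : finType) (lam : {set T} -> int) (k : int)
    (Tg : {set {set T}}) (R G : {set T}) :
  connectivity_system lam ->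
  tangle lam k Tg ->
  strong_ksep lam k Tg R G ->
  [/\
   (* (i) *)
   (forall A : {set T}, A \subset G -> A != set0 -> tweak Tg A ->
      kseparating lam k (R :|: A) -> tstrong Tg (G :\: A) ->
      tequiv lam k Tg R G (R :|: A) (G :\: A)),
   (* (ii) *)
   (forall A : {set T}, nonsequential lam k Tg R G ->
      A \subset G -> A != set0 -> tweak Tg A ->
      kseparating lam k (R :|: A) ->
      tequiv lam k Tg (R :|: A) (G :\: A) R G),
   (* (iii) *)
   (nonsequential lam k Tg R G ->
      tequiv lam k Tg (fcl lam k Tg R) (~: fcl lam k Tg R) R G) &
   (* (iv) *)
   (forall X : {set T}, nonsequential lam k Tg R G ->
      kseparating lam k X -> ~: fcl lam k Tg G \subset X -> X \subset R ->
      tequiv lam k Tg X (~: X) R G)].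
Proof.
move=> [sym sub] [_ t2 _ _] /and4P [/eqP GR kR sR sG]; subst G.
have kG : kseparating lam k (~: R) by rewrite /kseparating -sym.
have NS : nonsequential lam k Tg R (~: R) ->
    fcl lam k Tg R != setT /\ fcl lam k Tg (~: R) != setT.
  rewrite /nonsequential /tsequential setCK kR kG sR sG /=.
  by move=> /andP [a b].
split.
- by move=> A AG _ wA kRA sGA; apply: (partI sym sub t2).
- move=> A /NS [nR _] AG _ wA kRA; apply: tequiv_sym; apply: (partI sym sub t2) => //.
  apply/negP => w; move/eqP: nR; apply.
  have e1 : ~: R :\: A = ~: (R :|: A) by rewrite setCU setDE.
  rewrite e1 in w.
  rewrite -(weakC_fcl sym sub kRA w).
  apply: fcl_eq_of; last exact: subsetUl.
  move=> Y fY RY; apply: (keyL sym sub t2 (subsetUl R A) kRA sR _ fY RY).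
  by apply: (weak_sub _ wA); apply/subsetP => x; rewrite !inE; case: (x \in R); case: (x \in A).
- move=> /NS [nR _].
  have [fC sC fCC] := lemM sym sub t2 kR sR sG nR.
  move: (fC) => /and3P [sC' kC _].
  rewrite /tequiv /strong_ksep eqxx kC sC' sC kR sR sG eqxx /= (fcl_fc fC) fCC.
  by rewrite !eqxx.
- move=> X /NS [_ nG] kX DX XR.
  have sGG : tstrong Tg (~: ~: R) by rewrite setCK.
  have [fD sD fDD] := lemM sym sub t2 kG sG sGG nG.
  rewrite setCK in fDD.
  have sX : tstrong Tg X := strong_sup DX sD.
  have sCX : tstrong Tg (~: X) by apply: (strong_sup _ sG); rewrite setCS.
  rewrite /tequiv /strong_ksep !eqxx kX sX sCX kR sR sG /=.
  have -> : fcl lam k Tg X = fcl lam k Tg R.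
    apply/eqP; rewrite eqEsubset fcl_mono //= -fDD; exact: fcl_mono.
  have -> : fcl lam k Tg (~: X) = fcl lam k Tg (~: R).
    apply/eqP; rewrite eqEsubset andbC fcl_mono ?setCS //=.
    rewrite -(fcl_fc fD); apply: fcl_mono.
    by rewrite -setCS setCK.
  by rewrite !eqxx.
Qed.
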